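(* Let $q\ge 1$ be an integer and let $X$ be a random variable such that $qX$ is integer-valued almost surely. Then for all real $t$, \[ \varphi_{\lfloor X\rfloor}(t)=\sum_{j=0}^{q-1} h_q(t+2\pi j)\,\varphi_X(t+2\pi j) \qquad\text{and}\qquad \varphi_{\langle X\rangle}(t)=\sum_{j=0}^{q-1} \tilde h_q(t+2\pi j)\,\varphi_X(t+2\pi j). \]
   Context: For a random variable $Y$, $\varphi_Y(t):=\mathbb E\, e^{\mathrm i tY}$ is its characteristic function. $\lfloor x\rfloor$ is $x$ rounded down to an integer, and $\langle x\rangle:=\lfloor x+\tfrac12\rfloor$ is $x$ rounded to the nearest integer, with ties broken upward. Define \[ h_q(t):=\frac1q\sum_{k=0}^{q-1}e^{-\mathrm i tk/q}=\frac{1-e^{-\mathrm i t}}{q(1-e^{-\mathrm i t/q})}, \] where the fraction is interpreted as $1$ when $t\in 2\pi q\mathbb Z$. If $q$ is even, define $\tilde h_q(t):=\frac1q\sum_{k=-q/2}^{q/2-1}e^{-\mathrm i tk/q}=e^{\mathrm i t/2}h_q(t)$. If $q$ is odd, define $\tilde h_q(t):=\frac1q\sum_{k=-(q-1)/2}^{(q-1)/2}e^{-\mathrm i tk/q}=\frac{\sin(t/2)}{q\sin(t/(2q))}$, again interpreted as $1$ when $t\in 2\pi q\mathbb Z$. *)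

(* Defs.v *)
From HB Require Import structures.
From mathcomp Require Import all_boot all_order all_algebra.
From mathcomp Require Import all_classical all_reals all_analysis.
From mathcomp Require Import complex.
Set Implicit Arguments. Unset Strict Implicit. Unset Printing Implicit Defensive.
Import Order.TTheory GRing.Theory Num.Theory.
Local Open Scope ring_scope.
Local Open Scope complex_scope.

Definition expi (R : realType) (theta : R) : R[i] := cos theta +i* sin theta.

(* Characteristic function phi_Y(t) = E e^{i t Y}
   = E cos(tY) + i E sin(tY)  (both integrands bounded, hence integrable). *)
Definition charfun (d : measure_display) (T : measurableType d) (R : realType)
  (P : probability T R) (Y : T -> R) (t : R) : R[i] :=
  (Rintegral P setT (fun w => cos (t * Y w)))
  +i* (Rintegral P setT (fun w => sin (t * Y w))).

Definition floorR (R : realType) (x : R) : R := (Num.floor x)%:~R.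
Definition roundR (R : realType) (x : R) : R := (Num.floor (x + 2^-1))%:~R.

Definition h_q (R : realType) (q : nat) (t : R) : R[i] :=
  ((q%:R)^-1)%:C * \sum_(k < q) expi (- (t * k%:R / q%:R)).

(* tilde h_q(t) = (1/q) sum_{k=-q/2}^{q/2-1} e^{-i t k/q}  (q even)
                = (1/q) sum_{k=-(q-1)/2}^{(q-1)/2} e^{-i t k/q}  (q odd) *)
Definition ht_q (R : realType) (q : nat) (t : R) : R[i] :=
  if odd q then
    ((q%:R)^-1)%:C *
      \sum_(k < q) expi (- (t * ((k%:Z - ((q.-1)./2)%:Z)%:~R) / q%:R))
  else
    ((q%:R)^-1)%:C *
      \sum_(k < q) expi (- (t * ((k%:Z - (q./2)%:Z)%:~R) / q%:R)).

(* Main.v *)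
Require Import Defs.
From HB Require Import structures.
From mathcomp Require Import all_boot all_order all_algebra.
From mathcomp Require Import all_classical all_reals all_analysis.
From mathcomp Require Import complex.
From mathcomp Require Import lra ring zify measurable_realfun.
Import Order.TTheory GRing.Theory Num.Theory.
Local Open Scope ring_scope.
Local Open Scope complex_scope.
Section S.
Variable R : realType.
Lemma expiD (a b : R) : expi (a + b) = expi a * expi b.
Proof. rewrite /expi cosD sinD; simpc; congr (_ +i* _); exact: addrC. Qed.
Lemma expi0 : expi (0:R) = 1.
Proof. by rewrite /expi cos0 sin0. Qed.
Lemma expiMn (a : R) (n : nat) : expi (n%:R * a) = expi a ^+ n.
Proof.
elim: n => [|n IH]; first by rewrite mul0r expi0 expr0.
by rewrite -addn1 natrD mulrDl mul1r expiD IH exprD expr1.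
Qed.
Lemma expiN (a : R) : expi (- a) * expi a = 1.
Proof. by rewrite -expiD addNr expi0. Qed.
Lemma expi2pi : expi (2 * pi : R) = 1.
Proof. by rewrite /expi mulr_natl cos2pi sin2pi. Qed.
Lemma expi2piZ (z : int) : expi (2 * pi * z%:~R : R) = 1.
Proof.
case: z => n.
  by rewrite mulrC -[_%:~R]/(n%:R) expiMn expi2pi expr1n.
rewrite NegzE mulrN -[X in _ = X](expiN (2 * pi * (n.+1)%:R)).
by rewrite mulrC expiMn expi2pi expr1n mulr1.
Qed.
Lemma expi_ne1 (th : R) : sin th != 0 -> expi (2 * th) != 1.
Proof.
move=> s0; apply/negP => /eqP /(congr1 (@complex.Re R)) /=.
rewrite mulr2n mulrDl mul1r cosD -expr2 -expr2 cos2sin2 => /eqP.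
rewrite -addrA -[X in _ == X]addr0 (inj_eq (addrI _)) -opprD oppr_eq0 -mulr2n.
by rewrite mulrn_eq0 /= sqrf_eq0 (negbTE s0).
Qed.
Lemma sin_pi_ne0 (y : R) : -1 < y < 1 -> y != 0 -> sin (pi * y) != 0.
Proof.
move=> /andP[y1 y2] y0.
have H x : 0 < x < 1 -> sin (pi * x) != 0.
  move=> /andP[x0 x1]; rewrite gt_eqF //; apply: sin_gt0_pi.
  by rewrite mulr_gt0 ?pi_gt0 // gtr_pMr ?pi_gt0.
have [yn|yp] : y < 0 \/ 0 < y.
  by move: y0; rewrite neq_lt => /orP[]; [left|right].
  by rewrite -oppr_eq0 -sinN -mulrN H // oppr_gt0 yn ltrNl.
by rewrite H // yp.
Qed.
Lemma sum_roots (q a b : nat) : (a < q)%N -> (b < q)%N -> a != b ->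
  \sum_(j < q) expi (2 * pi * j%:R * (a%:R - b%:R) / q%:R) = 0 :> R[i].
Proof.
move=> aq bq ab.
have q0 : (0 < q%:R :> R)%R by rewrite ltr0n (leq_ltn_trans _ aq).
have aqR : (a%:R < q%:R :> R) by rewrite ltr_nat.
have bqR : (b%:R < q%:R :> R) by rewrite ltr_nat.
have a0 : (0 <= a%:R :> R) by [].
have b0 : (0 <= b%:R :> R) by [].
set z := expi (2 * pi * (a%:R - b%:R) / q%:R : R).
have E j : expi (2 * pi * j%:R * (a%:R - b%:R) / q%:R) = z ^+ j.
  by rewrite -expiMn /z; congr expi; rewrite !mulrA; congr (_ * _ * _); rewrite mulrC mulrA.
under eq_bigr do rewrite E.
have zq : z ^+ q = 1.
  rewrite /z -expiMn mulrC -!mulrA mulVf ?gt_eqF // mulr1 mulrC.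
  rewrite -(intrB R a b) [pi * _ * 2]mulrC mulrA. exact: expi2piZ.
have z1 : z - 1 != 0.
  rewrite subr_eq0 /z -mulrA -mulrA; apply: expi_ne1; apply: sin_pi_ne0.
    by rewrite ltr_pdivrMr // ltr_pdivlMr // mulN1r mul1r; apply/andP; split; lra.
  by rewrite mulf_eq0 invr_eq0 (gt_eqF q0) orbF subr_eq0 eqr_nat.
have := subrX1 z q; rewrite zq subrr => /esym/eqP; rewrite mulf_eq0 (negbTE z1) /=.
by move/eqP.
Qed.
Lemma key (q : nat) (n c m : int) (t : R) : (0 < q)%N ->
  (m * q%:Z <= n + c)%R -> (n + c < m * q%:Z + q%:Z)%R ->
  \sum_(j < q) (((q%:R)^-1)%:C *
     \sum_(k < q) expi (- ((t + 2 * pi * j%:R) * ((k%:Z - c)%:~R) / q%:R)))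
     * expi ((t + 2 * pi * j%:R) * (n%:~R / q%:R)) = expi (t * m%:~R).
Proof.
move=> q0 h1 h2.
have [k0 k0q hk0] : exists2 k0 : nat, (k0 < q)%N & n + c = m * q%:Z + k0%:Z.
  exists (absz ((n + c - m * q%:Z)%R)); lia.
have qR : (q%:R : R) != 0 by rewrite pnatr_eq0 -lt0n.
have hn : (n%:~R : R) = m%:~R * q%:R + k0%:R - c%:~R.
  have := congr1 (fun z : int => (z%:~R : R)) hk0; rewrite /= !intrD intrM /=.
  by move=> H; rewrite -H addrK.
have E (j : 'I_q) (k : 'I_q) :
  expi (- ((t + 2 * pi * j%:R) * ((k%:Z - c)%:~R) / q%:R)) *
    expi ((t + 2 * pi * j%:R) * (n%:~R / q%:R)) =
  expi (t * (m%:~R * q%:R + k0%:R - k%:R) / q%:R) *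
    expi (j%:R * (2 * pi * m%:~R)) *
    expi (2 * pi * j%:R * (k0%:R - k%:R) / q%:R).
  rewrite -!expiD; congr expi; rewrite intrB hn /=; field; exact: qR.
have E2 (j : nat) : expi (j%:R * (2 * pi * m%:~R) : R) = 1.
  by rewrite expiMn expi2piZ expr1n.
under eq_bigr do rewrite -mulrA big_distrl /= big_distrr /=.
rewrite exchange_big /=.
under eq_bigr => k _.
  under eq_bigr => j _ do rewrite E E2 GRing.mulr1 mulrA.
  rewrite -big_distrr /=.
  over.
rewrite (bigD1 (Ordinal k0q)) //= [X in _ + X]big1 ?addr0; last first.
  move=> k kk0; rewrite sum_roots ?mulr0 //.
  by apply: contraNneq kk0 => H; apply/eqP; apply/val_inj => /=; rewrite H.
rewrite subrr.
under eq_bigr do rewrite mulr0 mul0r expi0.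
rewrite sumr_const card_ord addrK.
have -> : t * (m%:~R * q%:R) / q%:R = t * m%:~R by field.
have -> : (q%:R : R[i]) = (q%:R : R)%:C by rewrite rmorph_nat.
by rewrite mulrAC -rmorphM mulVf // rmorph1 mul1r.
Qed.
Lemma pt_floor (q : nat) (x t : R) (n : int) : (0 < q)%N -> q%:R * x = n%:~R ->
  expi (t * floorR x) = \sum_(j < q) h_q q (t + 2 * pi * j%:R) * expi ((t + 2 * pi * j%:R) * x).
Proof.
move=> q0 hx.
have qR : (q%:R : R) != 0 by rewrite pnatr_eq0 -lt0n.
have xe : x = n%:~R / q%:R by rewrite -hx; field.
have /andP[f1 f2] := floor_itv x.
have H1 : Num.floor x * q%:Z <= n + 0.
  rewrite addr0 -(ler_int R) intrM -hx mulrC ler_pM2l //. by rewrite ltr0n.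
have H2 : n + 0 < Num.floor x * q%:Z + q%:Z.
  rewrite addr0 -(ltr_int R) intrD intrM -hx mulrC -[X in _ + X]mul1r -mulrDl ltr_pM2r; last by rewrite ltr0n.
  by move: f2; rewrite intrD.
rewrite /floorR -(@key q n 0 (Num.floor x) t q0 H1 H2); apply: eq_bigr => j _; rewrite -xe /h_q.
congr (_ * _ * _); apply: eq_bigr => k _; by rewrite subr0.
Qed.
Lemma round_aux (q : nat) (x : R) (n m c : int) : (0 < q)%N -> q%:R * x = n%:~R ->
  (q%:R : R) <= 2 * c%:~R + 1 -> 2 * c%:~R <= (q%:R : R) ->
  m%:~R <= x + 2^-1 < (m + 1)%:~R ->
  m * q%:Z <= n + c /\ n + c < m * q%:Z + q%:Z.
Proof.
move=> q0 hx c1 c2 /andP[f1 f2].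
have qp : (0 < q%:R :> R) by rewrite ltr0n.
rewrite intrD in f2.
have A : ((m * q%:Z - n - c)%:~R : R) < 1.
  rewrite !intrB intrM -hx /=; nra.
have B : ((n + c - m * q%:Z - q%:Z)%:~R : R) < 0.
  rewrite !intrB !intrD intrM -hx /=; nra.
move: A B; rewrite -[1]/(1%:~R : R) -[0]/(0%:~R : R) !ltr_int; lia.
Qed.
Lemma pt_round (q : nat) (x t : R) (n : int) : (0 < q)%N -> q%:R * x = n%:~R ->
  expi (t * roundR x) = \sum_(j < q) ht_q q (t + 2 * pi * j%:R) * expi ((t + 2 * pi * j%:R) * x).
Proof.
move=> q0 hx.
have qR : (q%:R : R) != 0 by rewrite pnatr_eq0 -lt0n.
have xe : x = n%:~R / q%:R by rewrite -hx; field.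
have fi := floor_itv (x + 2^-1).
rewrite /roundR /ht_q; case: (boolP (odd q)) => oq /=.
  have qe : q = ((q.-1)./2 * 2 + 1)%N by lia.
  have qR' : (q%:R : R) = ((q.-1)./2)%:R * 2 + 1 by have := congr1 (fun k : nat => (k%:R : R)) qe; rewrite /= natrD natrM.
  have c1 : (q%:R : R) <= 2 * (((q.-1)./2)%:Z)%:~R + 1  by rewrite -pmulrn qR'; lra.
  have c2 : 2 * (((q.-1)./2)%:Z)%:~R <= (q%:R : R) by rewrite -pmulrn qR'; lra.
  have [H1 H2] := @round_aux q x n (Num.floor (x + 2^-1)) ((q.-1)./2)%:Z q0 hx c1 c2 fi.
  rewrite -(@key q n _ _ t q0 H1 H2); apply: eq_bigr => j _; by rewrite -xe.
have qe : q = ((q./2) * 2)%N by lia.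
have qR' : (q%:R : R) = (q./2)%:R * 2 by have := congr1 (fun k : nat => (k%:R : R)) qe; rewrite /= natrM.
have c1 : (q%:R : R) <= 2 * ((q./2)%:Z)%:~R + 1 by rewrite -pmulrn qR'; lra.
have c2 : 2 * ((q./2)%:Z)%:~R <= (q%:R : R) by rewrite -pmulrn qR'; lra.
have [H1 H2] := @round_aux q x n (Num.floor (x + 2^-1)) (q./2)%:Z q0 hx c1 c2 fi.
rewrite -(@key q n _ _ t q0 H1 H2); apply: eq_bigr => j _; by rewrite -xe.
Qed.
End S.
Section M.
Context d (T : measurableType d) (R : realType) (P : probability T R).

Lemma int_bnd (f : T -> R) (M : R) : measurable_fun setT f ->
  (forall w, `|f w| <= M) -> P.-integrable setT (EFin \o f).
Proof.
move=> mf fM; apply: measurable_bounded_integrable => //.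
  first [ by rewrite ltey_eq fin_num_measure | by apply: (le_lt_trans (probability_le1 P measurableT)); exact: ltry | by apply: fin_num_fun_lty; exact: fin_num_measure ].
exists M; split; first exact: num_real.
by move=> x Mx y _ /=; rewrite (le_trans (fM y)) // ltW.
Qed.

Lemma Rint_sum (I : Type) (s : seq I) (f : I -> T -> R) :
  (forall i, P.-integrable setT (EFin \o f i)) ->
  P.-integrable setT (EFin \o (fun w => \sum_(i <- s) f i w)) /\
  Rintegral P setT (fun w => \sum_(i <- s) f i w) = \sum_(i <- s) Rintegral P setT (f i).
Proof.
move=> fi; elim: s => [|a s [IHi IHe]].
  under eq_fun do rewrite big_nil.
  split; first by apply: (@int_bnd _ 0); [exact: measurable_cst | move=> w; rewrite normr0].
  by rewrite big_nil Rintegral_cst //= mul0r.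
have -> : (fun w => \sum_(i <- a :: s) f i w) = (fun w => f a w + \sum_(i <- s) f i w).
  by apply: funext => w; rewrite big_cons.
split.
  have := integrableD measurableT (fi a) IHi.
  by apply: eq_integrable => // w _ /=; rewrite EFinD.
by rewrite RintegralD // IHe big_cons.
Qed.
Lemma Re_sum (I : Type) (r : seq I) (F : I -> R[i]) :
  complex.Re (\sum_(i <- r) F i) = \sum_(i <- r) complex.Re (F i).
Proof. by apply: (big_morph _ (fun x y => _) (erefl _)); case=> ? ?; case. Qed.
Lemma Im_sum (I : Type) (r : seq I) (F : I -> R[i]) :
  complex.Im (\sum_(i <- r) F i) = \sum_(i <- r) complex.Im (F i).
Proof. by apply: (big_morph _ (fun x y => _) (erefl _)); case=> ? ?; case. Qed.

Lemma mcos (X : T -> R) (s : R) : measurable_fun setT X ->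
  measurable_fun setT (fun w => cos (s * X w)).
Proof.
move=> mX; apply: measurableT_comp; last exact: measurable_funM.
exact: continuous_measurable_fun (@continuous_cos R).
Qed.
Lemma msin (X : T -> R) (s : R) : measurable_fun setT X ->
  measurable_fun setT (fun w => sin (s * X w)).
Proof.
move=> mX; apply: measurableT_comp; last exact: measurable_funM.
exact: continuous_measurable_fun (@continuous_sin R).
Qed.
Lemma icos (X : T -> R) (s : R) : measurable_fun setT X ->
  P.-integrable setT (EFin \o (fun w => cos (s * X w))).
Proof. by move=> mX; apply: (@int_bnd _ 1); [exact: mcos | move=> w; exact: cos_max]. Qed.
Lemma isin (X : T -> R) (s : R) : measurable_fun setT X ->
  P.-integrable setT (EFin \o (fun w => sin (s * X w))).
Proof. by move=> mX; apply: (@int_bnd _ 1); [exact: msin | move=> w; exact: sin_max]. Qed.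
Lemma iZcos (X : T -> R) (a s : R) : measurable_fun setT X ->
  P.-integrable setT (EFin \o (fun w => a * cos (s * X w))).
Proof.
move=> mX; apply: (@int_bnd _ `|a|).
  by apply: measurable_funM; [exact: measurable_cst | exact: mcos].
by move=> w; rewrite normrM ler_piMr // cos_max.
Qed.
Lemma iZsin (X : T -> R) (a s : R) : measurable_fun setT X ->
  P.-integrable setT (EFin \o (fun w => a * sin (s * X w))).
Proof.
move=> mX; apply: (@int_bnd _ `|a|).
  by apply: measurable_funM; [exact: measurable_cst | exact: msin].
by move=> w; rewrite normrM ler_piMr // sin_max.
Qed.
Lemma complex_eta (z : R[i]) : z = complex.Re z +i* complex.Im z.
Proof. by case: z. Qed.
Lemma ReMexpi (z : R[i]) (a : R) :
  complex.Re (z * expi a) = complex.Re z * cos a - complex.Im z * sin a.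
Proof. by case: z => x y; rewrite /expi; simpc. Qed.
Lemma ImMexpi (z : R[i]) (a : R) :
  complex.Im (z * expi a) = complex.Re z * sin a + complex.Im z * cos a.
Proof. by case: z => x y; rewrite /expi; simpc; rewrite addrC. Qed.

Lemma charfun_comb (X Y : T -> R) (mX : measurable_fun setT X)
  (mY : measurable_fun setT Y) (q : nat) (H : 'I_q -> R[i]) (s : 'I_q -> R) (t : R) :
  {ae P, forall w, expi (t * Y w) = \sum_(j < q) H j * expi (s j * X w)} ->
  charfun P Y t = \sum_(j < q) H j * charfun P X (s j).
Proof.
move=> hae.
pose RC := fun (j : 'I_q) w => complex.Re (H j) * cos (s j * X w) - complex.Im (H j) * sin (s j * X w).
pose IC := fun (j : 'I_q) w => complex.Re (H j) * sin (s j * X w) + complex.Im (H j) * cos (s j * X w).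
have iRC j : P.-integrable setT (EFin \o RC j).
  apply: (@int_bnd _ (`|complex.Re (H j)| + `|complex.Im (H j)|)).
    by apply: measurable_funB; apply: measurable_funM;
      [exact: measurable_cst | exact: mcos | exact: measurable_cst | exact: msin].
  move=> w; rewrite (le_trans (ler_normB _ _)) // lerD // normrM ler_piMr //.
    exact: cos_max.
  exact: sin_max.
have iIC j : P.-integrable setT (EFin \o IC j).
  apply: (@int_bnd _ (`|complex.Re (H j)| + `|complex.Im (H j)|)).
    by apply: measurable_funD; apply: measurable_funM;
      [exact: measurable_cst | exact: msin | exact: measurable_cst | exact: mcos].
  move=> w; rewrite (le_trans (ler_normD _ _)) // lerD // normrM ler_piMr //.
    exact: sin_max.
  exact: cos_max.
have ecos : Rintegral P setT (fun w => cos (t * Y w)) = \sum_j Rintegral P setT (RC j).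
  rewrite -(proj2 (@Rint_sum _ (index_enum 'I_q) _ iRC)).
  rewrite /Rintegral; congr fine; apply: ae_eq_integral => //.
  - by apply/measurable_EFinP; exact: mcos.
  - by case/integrableP: (proj1 (@Rint_sum _ (index_enum 'I_q) _ iRC)).
  apply: filterS hae => w hw _ /=; congr EFin.
  by have := congr1 (@complex.Re R) hw; rewrite Re_sum /=; under eq_bigr do rewrite ReMexpi.
have esin : Rintegral P setT (fun w => sin (t * Y w)) = \sum_j Rintegral P setT (IC j).
  rewrite -(proj2 (@Rint_sum _ (index_enum 'I_q) _ iIC)).
  rewrite /Rintegral; congr fine; apply: ae_eq_integral => //.
  - by apply/measurable_EFinP; exact: msin.
  - by case/integrableP: (proj1 (@Rint_sum _ (index_enum 'I_q) _ iIC)).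
  apply: filterS hae => w hw _ /=; congr EFin.
  by have := congr1 (@complex.Im R) hw; rewrite Im_sum /=; under eq_bigr do rewrite ImMexpi.
rewrite /charfun ecos esin [RHS]complex_eta Re_sum Im_sum; congr (_ +i* _).
  apply: eq_bigr => j _; rewrite RintegralB //; [|exact: iZcos|exact: iZsin].
  rewrite !RintegralZl //; [|exact: isin|exact: icos].
  by case: (H j) => a b; simpc.
apply: eq_bigr => j _; rewrite RintegralD //; [|exact: iZsin|exact: iZcos].
rewrite !RintegralZl //; [|exact: icos|exact: isin].
by case: (H j) => a b; simpc; rewrite addrC.
Qed.
End M.

Theorem theorem1 (d : measure_display) (T : measurableType d) (R : realType)
  (P : probability T R) (q : nat) (X : {RV P >-> R}) :
  (1 <= q)%N ->
  {ae P, forall w, (q%:R * X w) \is a Num.int} ->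
  forall t : R,
    charfun P (fun w => floorR (X w)) t =
      \sum_(j < q) h_q q (t + 2 * pi * j%:R) * charfun P X (t + 2 * pi * j%:R)
  /\
    charfun P (fun w => roundR (X w)) t =
      \sum_(j < q) ht_q q (t + 2 * pi * j%:R) * charfun P X (t + 2 * pi * j%:R).
Proof.
move=> q1 hint t.
have mX : measurable_fun setT X by exact: measurable_funPT.
have mF : measurable_fun setT (fun w => floorR (X w)).
  apply: measurableT_comp mX; apply: nondecreasing_measurable => // a b ab.
  by rewrite /floorR ler_int le_floor.
have mG : measurable_fun setT (fun w => roundR (X w)).
  apply: measurableT_comp mX; apply: nondecreasing_measurable => // a b ab.
  by rewrite /roundR ler_int le_floor // lerD2r.
split.
  apply: (@charfun_comb _ _ _ P X (fun w => floorR (X w)) mX mF q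
    (fun j : 'I_q => h_q q (t + 2 * pi * j%:R)) (fun j : 'I_q => t + 2 * pi * j%:R) t).
  apply: filterS hint => w /intrP [n hn]; exact: (@pt_floor R q (X w) t n q1 hn).
apply: (@charfun_comb _ _ _ P X (fun w => roundR (X w)) mX mG q
  (fun j : 'I_q => ht_q q (t + 2 * pi * j%:R)) (fun j : 'I_q => t + 2 * pi * j%:R) t).
apply: filterS hint => w /intrP [n hn]; exact: (@pt_round R q (X w) t n q1 hn).
Qed.
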